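(* Let $\beta_U,\beta_H,\beta_R\ge 0$ with $\beta_U>0$, $\beta_H+\beta_R>0$ and $\beta_U+\beta_H+\beta_R=1$, and let $\gamma\in[0,1]$. For $x\in[0,1]$ put $p(x)=\beta_U+x\beta_R$ and $$E[R_r](x)=\frac{\beta_R}{\beta_R+\beta_H}\,(1-p(x))+\frac{(1-x)\beta_R}{\beta_H+(1-x)\beta_R}\,(1-p(x))\,\gamma+\frac{x\beta_R}{x\beta_R+\beta_U}\,p(x),$$ where any term whose denominator is $0$ is read as $0$. Then for all $x\in[0,1]$, $$E[R_r](x)=\beta_R\Big(1+\gamma+\Big(\frac{\beta_H}{\beta_H+\beta_R}-\gamma\Big)x\Big).$$ In particular, when $\beta_R>0$, the maximum of $E[R_r]$ over $x\in[0,1]$ is attained only at $x=1$ if $\gamma<\frac{\beta_H}{1-\beta_U}$, and only at $x=0$ if $\gamma>\frac{\beta_H}{1-\beta_U}$.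
   Context: Model of an undercutting attack with safe depth $D=1$ (the undercutter abandons its fork once it is one block behind). Miners are split into an undercutter with mining-power fraction $\beta_U$, honest miners with total fraction $\beta_H$, and the remaining rational (non-undercutting) miners with total fraction $\beta_R$. Fees are normalized so the main-chain block being undercut holds fee $1$, the next main-chain block and the undercutter's first fork block each hold $\gamma$, and the second fork block holds $1$. A fraction $x$ of the rational mining power moves to the fork after the fork and the main chain tie at one block each; $p(x)$ is the probability that the fork wins. $E[R_r](x)$ is the rational miners' expected fee revenue. *)

(* Defs.v *)
From HB Require Import structures.
From mathcomp Require Import all_boot all_order all_algebra.
Set Implicit Arguments. Unset Strict Implicit. Unset Printing Implicit Defensive.
Import Order.TTheory GRing.Theory Num.Theory.
Local Open Scope ring_scope.

Definition sdiv (R : fieldType) (a b : R) : R := if b == 0 then 0 else a / b.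

(* Probability that the fork wins when a fraction x of rational power moves. *)
Definition pfork (R : fieldType) (bU bR x : R) : R := bU + x * bR.

Definition ERr (R : fieldType) (bU bH bR g x : R) : R :=
  sdiv bR (bR + bH) * (1 - pfork bU bR x)
  + sdiv ((1 - x) * bR) (bH + (1 - x) * bR) * (1 - pfork bU bR x) * g
  + sdiv (x * bR) (x * bR + bU) * pfork bU bR x.

(* Main.v *)
Require Import Defs.
From HB Require Import structures.
From mathcomp Require Import all_boot all_order all_algebra.
From mathcomp Require Import ring lra.
Import Order.TTheory GRing.Theory Num.Theory.
Local Open Scope ring_scope.

Lemma ident (R : realFieldType) (bU bH bR g x : R) :
  0 <= bH -> 0 <= bR -> 0 < bU -> 0 < bH + bR ->
  bU + bH + bR = 1 -> 0 <= x -> x <= 1 ->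
  ERr bU bH bR g x = bR * (1 + g + (bH / (bH + bR) - g) * x).
Proof.
move=> hH hR hU hs h1 x0 x1.
rewrite /ERr /sdiv /pfork.
have -> : (bR + bH == 0) = false by apply/negbTE; rewrite lt0r_neq0 //; lra.
have -> : (x * bR + bU == 0) = false.
  by apply/negbTE; rewrite lt0r_neq0 //; nra.
have e1 : 1 - (bU + x * bR) = bH + (1 - x) * bR by lra.
have hs' : bH + bR != 0 by rewrite lt0r_neq0.
have hs2 : bR + bH != 0 by rewrite addrC.
have hp : x * bR + bU != 0 by rewrite lt0r_neq0 //; nra.
case: eqP => [E|/eqP E].
  have hb : bH = 0 by nra.
  have hb2 : (1 - x) * bR = 0 by lra.
  have hx : x = 1.
    have : (1 - x) * bR == 0 by apply/eqP.
    rewrite hb addr0 in hs2.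
    rewrite mulf_eq0 (negbTE hs2) orbF subr_eq0 => /eqP <- //.
  subst x bH. rewrite (_ : 1 - (bU + 1 * bR) = 0); last lra.
  field; apply/andP; split; rewrite lt0r_neq0 //; lra.
rewrite e1.
have -> : bU + x * bR = x * bR + bU by rewrite addrC.
by field; rewrite hs' hp E.
Qed.

Theorem mainTheorem1 (R : realFieldType) (bU bH bR g : R) :
  0 <= bU -> 0 <= bH -> 0 <= bR -> 0 < bU -> 0 < bH + bR ->
  bU + bH + bR = 1 -> 0 <= g -> g <= 1 ->
  (forall x : R, 0 <= x -> x <= 1 ->
     ERr bU bH bR g x = bR * (1 + g + (bH / (bH + bR) - g) * x))
  /\ (0 < bR ->
      (g < bH / (1 - bU) ->
         (forall x : R, 0 <= x -> x <= 1 -> ERr bU bH bR g x <= ERr bU bH bR g 1)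
         /\ (forall x : R, 0 <= x -> x <= 1 ->
               ERr bU bH bR g x = ERr bU bH bR g 1 -> x = 1))
      /\
      (bH / (1 - bU) < g ->
         (forall x : R, 0 <= x -> x <= 1 -> ERr bU bH bR g x <= ERr bU bH bR g 0)
         /\ (forall x : R, 0 <= x -> x <= 1 ->
               ERr bU bH bR g x = ERr bU bH bR g 0 -> x = 0))).
Proof.
move=> h0 hH hR hU hs h1 g0 g1.
have I := fun x => @ident R bU bH bR g x hH hR hU hs h1.
split=> [x x0 x1|bR0]; first exact: I.
have e : 1 - bU = bH + bR by lra.
rewrite e.
set c := bH / (bH + bR).
rewrite !I ?lexx ?ler01 //.
have D : forall x, bR * (1 + g + (c - g) * x) = bR * (1 + g) + bR * (c - g) * x.
  by move=> x; ring.
rewrite !D.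
split=> hc.
- have hc' : 0 < bR * (c - g) by rewrite mulr_gt0 // subr_gt0.
  move: hc'; set k := bR * (c - g) => hk.
  split=> x x0 x1; rewrite I // D -/k; [|move=> E].
  + rewrite lerD2l mulr1 -subr_ge0 -{1}(mulr1 k) -mulrBr; rewrite -/k; apply: mulr_ge0; [exact: ltW|lra].
  + have : k * (1 - x) = 0 by rewrite mulrBr mulr1; lra.
    move/eqP; rewrite mulf_eq0 (gt_eqF hk) /= subr_eq0 => /eqP; lra.
- have hc' : 0 < bR * (g - c) by rewrite mulr_gt0 // subr_gt0.
  have Ek : bR * (c - g) = - (bR * (g - c)) by ring.
  rewrite Ek.
  move: hc'; set k := bR * (g - c) => hk.
  split=> x x0 x1; rewrite I // D Ek -/k; [|move=> E].
  + rewrite lerD2l mulr0 mulNr oppr_le0; rewrite -/k; apply: mulr_ge0; [exact: ltW|lra].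
  + have : k * x = 0 by move: E; rewrite mulr0 mulNr; lra.
    move/eqP; rewrite mulf_eq0 (gt_eqF hk) /= => /eqP //.
Qed.
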